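(* For every $(z,\tau)\in\mathbb{C}\times\mathbb{H}^2$ the following four identities hold, where theta constants without arguments are evaluated at $(0,\tau)$: \begin{align*} &\theta^2\!\begin{bmatrix}1\\ \tfrac12\end{bmatrix}\theta^2\!\begin{bmatrix}1\\ 0\end{bmatrix}\!(z,\tau)+\theta^2\!\begin{bmatrix}1\\ 0\end{bmatrix}\theta\!\begin{bmatrix}1\\ \tfrac12\end{bmatrix}\!(z,\tau)\,\theta\!\begin{bmatrix}1\\ \tfrac32\end{bmatrix}\!(z,\tau)-\theta^2\!\begin{bmatrix}1\\ \tfrac12\end{bmatrix}\theta^2\!\begin{bmatrix}1\\ 1\end{bmatrix}\!(z,\tau)=0,\\ &\theta^2\!\begin{bmatrix}1\\ \tfrac23\end{bmatrix}\theta\!\begin{bmatrix}1\\ \tfrac13\end{bmatrix}\!(z,\tau)\,\theta\!\begin{bmatrix}1\\ \tfrac53\end{bmatrix}\!(z,\tau)-\theta^2\!\begin{bmatrix}1\\ \tfrac13\end{bmatrix}\theta\!\begin{bmatrix}1\\ \tfrac23\end{bmatrix}\!(z,\tau)\,\theta\!\begin{bmatrix}1\\ \tfrac43\end{bmatrix}\!(z,\tau)+\theta\!\begin{bmatrix}1\\ 0\end{bmatrix}\theta\!\begin{bmatrix}1\\ \tfrac23\end{bmatrix}\theta^2\!\begin{bmatrix}1\\ 1\end{bmatrix}\!(z,\tau)=0,\\ &\theta^2\!\begin{bmatrix}1\\ \tfrac34\end{bmatrix}\theta\!\begin{bmatrix}1\\ \tfrac14\end{bmatrix}\!(z,\tau)\,\theta\!\begin{bmatrix}1\\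 \tfrac74\end{bmatrix}\!(z,\tau)-\theta^2\!\begin{bmatrix}1\\ \tfrac14\end{bmatrix}\theta\!\begin{bmatrix}1\\ \tfrac34\end{bmatrix}\!(z,\tau)\,\theta\!\begin{bmatrix}1\\ \tfrac54\end{bmatrix}\!(z,\tau)+\theta\!\begin{bmatrix}1\\ 0\end{bmatrix}\theta\!\begin{bmatrix}1\\ \tfrac12\end{bmatrix}\theta^2\!\begin{bmatrix}1\\ 1\end{bmatrix}\!(z,\tau)=0,\\ &\theta^2\!\begin{bmatrix}1\\ \tfrac35\end{bmatrix}\theta\!\begin{bmatrix}1\\ \tfrac15\end{bmatrix}\!(z,\tau)\,\theta\!\begin{bmatrix}1\\ \tfrac95\end{bmatrix}\!(z,\tau)-\theta^2\!\begin{bmatrix}1\\ \tfrac15\end{bmatrix}\theta\!\begin{bmatrix}1\\ \tfrac35\end{bmatrix}\!(z,\tau)\,\theta\!\begin{bmatrix}1\\ \tfrac75\end{bmatrix}\!(z,\tau)+\theta\!\begin{bmatrix}1\\ \tfrac15\end{bmatrix}\theta\!\begin{bmatrix}1\\ \tfrac35\end{bmatrix}\theta^2\!\begin{bmatrix}1\\ 1\end{bmatrix}\!(z,\tau)=0. \end{align*}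
   Context: $\mathbb{H}^2=\{\tau\in\mathbb{C}:\operatorname{Im}\tau>0\}$. For $\epsilon,\epsilon'\in\mathbb{R}$, $\zeta\in\mathbb{C}$, $\tau\in\mathbb{H}^2$, the theta function with characteristics is $\theta\begin{bmatrix}\epsilon\\ \epsilon'\end{bmatrix}(\zeta,\tau)=\sum_{n\in\mathbb{Z}}\exp\!\Big(2\pi i\Big[\tfrac12\big(n+\tfrac{\epsilon}{2}\big)^2\tau+\big(n+\tfrac{\epsilon}{2}\big)\big(\zeta+\tfrac{\epsilon'}{2}\big)\Big]\Big)$. The theta constant $\theta\begin{bmatrix}\epsilon\\ \epsilon'\end{bmatrix}$ (no argument) means $\theta\begin{bmatrix}\epsilon\\ \epsilon'\end{bmatrix}(0,\tau)$, and $\theta^k[\cdot]$ denotes the $k$-th power. *)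

(* Defs.v *)
From Stdlib Require Import Reals ZArith ClassicalEpsilon.
Open Scope R_scope.

Record Cplx := mkC { Cre : R ; Cim : R }.
Definition RtoC (x : R) : Cplx := mkC x 0.
Definition C0 : Cplx := RtoC 0.
Definition Ci : Cplx := mkC 0 1.
Definition Cadd (a b : Cplx) : Cplx := mkC (Cre a + Cre b) (Cim a + Cim b).
Definition Copp (a : Cplx) : Cplx := mkC (- Cre a) (- Cim a).
Definition Csub (a b : Cplx) : Cplx := Cadd a (Copp b).
Definition Cmul (a b : Cplx) : Cplx :=
  mkC (Cre a * Cre b - Cim a * Cim b) (Cre a * Cim b + Cim a * Cre b).
Definition Cnorm (a : Cplx) : R := sqrt (Cre a * Cre a + Cim a * Cim a).
Definition Cexp (a : Cplx) : Cplx :=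
  mkC (exp (Cre a) * cos (Cim a)) (exp (Cre a) * sin (Cim a)).
Definition Cpow2 (a : Cplx) : Cplx := Cmul a a.

Fixpoint Zpsum (f : Z -> Cplx) (N : nat) : Cplx :=
  match N with
  | O => f 0%Z
  | S M => Cadd (Zpsum f M)
             (Cadd (f (Z.of_nat (S M))) (f (- Z.of_nat (S M))%Z))
  end.

Definition Zseries_cv (f : Z -> Cplx) (l : Cplx) : Prop :=
  forall eps : R, eps > 0 -> exists N0 : nat,
    forall N : nat, (N >= N0)%nat -> Cnorm (Csub (Zpsum f N) l) < eps.

(* The value of the series (chosen limit; meaningful when it converges). *)
Definition Zsum (f : Z -> Cplx) : Cplx :=
  epsilon (inhabits C0) (fun l => Zseries_cv f l).

Definition in_H2 (tau : Cplx) : Prop := Cim tau > 0.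

Definition theta_term (e e' : R) (zeta tau : Cplx) (n : Z) : Cplx :=
  let m := IZR n + e / 2 in
  Cexp (Cmul (Cmul (RtoC (2 * PI)) Ci)
     (Cadd (Cmul (RtoC (/ 2 * (m * m))) tau)
           (Cmul (RtoC m) (Cadd zeta (RtoC (e' / 2)))))).

Definition theta (e e' : R) (zeta tau : Cplx) : Cplx := Zsum (theta_term e e' zeta tau).

Definition thetac (e e' : R) (tau : Cplx) : Cplx := theta e e' C0 tau.

(* Main.v *)
Require Import Defs.
From Stdlib Require Import Reals Lra Lia ZArith List Permutation ClassicalEpsilon FunctionalExtensionality.
Import ListNotations.
Open Scope R_scope.

Lemma Ceq (a b : Cplx) : Cre a = Cre b -> Cim a = Cim b -> a = b.
Proof. destruct a, b; simpl; intros; subst; reflexivity. Qed.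

Fixpoint rZ (N : nat) : list Z :=
  match N with
  | O => [0%Z]
  | S M => rZ M ++ [Z.of_nat (S M); (- Z.of_nat (S M))%Z]
  end.

Definition sum1 (h : Z -> R) (l : list Z) : R := fold_right (fun x acc => h x + acc) 0 l.

Lemma sum1_app h l1 l2 : sum1 h (l1 ++ l2) = sum1 h l1 + sum1 h l2.
Proof. induction l1; simpl; [ring | rewrite IHl1; ring]. Qed.

Lemma rZ_S h M : sum1 h (rZ (S M)) = sum1 h (rZ M) + (h (Z.of_nat (S M)) + h (- Z.of_nat (S M))%Z).
Proof. simpl rZ. rewrite sum1_app. simpl. ring. Qed.

Lemma Zpsum_Re f N : Cre (Zpsum f N) = sum1 (fun n => Cre (f n)) (rZ N).
Proof. induction N. simpl. ring. rewrite rZ_S. simpl Zpsum. simpl. rewrite IHN. ring. Qed.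
Lemma Zpsum_Im f N : Cim (Zpsum f N) = sum1 (fun n => Cim (f n)) (rZ N).
Proof. induction N. simpl. ring. rewrite rZ_S. simpl Zpsum. simpl. rewrite IHN. ring. Qed.

Definition pw (r : R) (n : Z) : R := r ^ Z.abs_nat n.
Definition G (r : R) (L : nat) : R := sum1 (pw r) (rZ L).

Lemma G_S r M : G r (S M) = G r M + 2 * r ^ (S M).
Proof.
  unfold G. rewrite rZ_S. unfold pw.
  replace (Z.abs_nat (- Z.of_nat (S M))) with (S M) by lia.
  replace (Z.abs_nat (Z.of_nat (S M))) with (S M) by lia. ring.
Qed.

Lemma G_closed r L : r <> 1 -> G r L = (1 + r - 2 * r ^ (S L)) / (1 - r).
Proof.
  intro Hr. assert (1 - r <> 0) by lra.
  induction L. unfold G; simpl; unfold pw; simpl. field. auto.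
  rewrite G_S, IHL. simpl. field. auto.
Qed.

Lemma abs_sub_le a b : Rabs (a - b) <= Rabs a + Rabs b.
Proof. unfold Rabs; repeat destruct Rcase_abs; lra. Qed.

Lemma pow_decr r M N : 0 <= r <= 1 -> (M <= N)%nat -> r ^ N <= r ^ M.
Proof.
  intros Hr HMN. induction HMN. lra. simpl.
  assert (0 <= r ^ m) by (apply pow_le; lra). nra.
Qed.

Lemma G_diff r M N : 0 <= r < 1 -> (M <= N)%nat -> 0 <= G r N - G r M <= 2 * r ^ M / (1 - r).
Proof.
  intros Hr HMN. rewrite !G_closed by lra.
  assert (0 < 1 - r) by lra.
  assert (r ^ S N <= r ^ S M) by (apply pow_decr; lia || lra).
  assert (0 <= r ^ S N) by (apply pow_le; lra).
  assert (r ^ S M <= r ^ M) by (apply pow_decr; lia || lra).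
  split.
  - unfold Rdiv. rewrite <- Rmult_minus_distr_r. apply Rmult_le_pos; [lra|].
    left; apply Rinv_0_lt_compat; lra.
  - unfold Rdiv. rewrite <- Rmult_minus_distr_r. apply Rmult_le_compat_r.
    left; apply Rinv_0_lt_compat; lra. lra.
Qed.

Lemma G_nonneg r L : 0 <= r -> 0 <= G r L.
Proof.
  intro Hr. induction L. unfold G, pw; simpl; lra.
  rewrite G_S. assert (0 <= r ^ S L) by (apply pow_le; lra). lra.
Qed.

Lemma sum1_diff h C r M N : 0 <= r < 1 -> (forall n, Rabs (h n) <= C * pw r n) ->
  (M <= N)%nat -> Rabs (sum1 h (rZ N) - sum1 h (rZ M)) <= C * (G r N - G r M).
Proof.
  intros Hr Hb HMN. induction HMN.
  - rewrite Rminus_diag, Rabs_R0. lra.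
  - rewrite rZ_S, G_S.
    pose proof (Hb (Z.of_nat (S m))) as H1. pose proof (Hb (- Z.of_nat (S m))%Z) as H2.
    unfold pw in H1, H2.
    replace (Z.abs_nat (- Z.of_nat (S m))) with (S m) in H2 by lia.
    replace (Z.abs_nat (Z.of_nat (S m))) with (S m) in H1 by lia.
    set (a := sum1 h (rZ m) - sum1 h (rZ M)) in *.
    replace (sum1 h (rZ m) + (h (Z.of_nat (S m)) + h (- Z.of_nat (S m))%Z) - sum1 h (rZ M))
      with (a + h (Z.of_nat (S m)) + h (- Z.of_nat (S m))%Z) by (unfold a; ring).
    eapply Rle_trans. apply Rabs_triang. eapply Rle_trans. apply Rplus_le_compat_r. apply Rabs_triang.
    lra.
Qed.

Lemma pow_small r eps : 0 <= r < 1 -> eps > 0 -> exists N0, forall n, (n >= N0)%nat -> r ^ n < eps.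
Proof.
  intros Hr He. destruct (pow_lt_1_zero r) with (y := eps) as [N0 HN].
  rewrite Rabs_right; lra. lra.
  exists N0. intros n Hn. specialize (HN n Hn). rewrite Rabs_right in HN. auto.
  apply Rle_ge, pow_le; lra.
Qed.

Lemma conv1 h C r : 0 <= r < 1 -> 0 < C -> (forall n, Rabs (h n) <= C * pw r n) ->
  exists l, Un_cv (fun N => sum1 h (rZ N)) l.
Proof.
  intros Hr HC Hb.
  assert (Hc : Cauchy_crit (fun N => sum1 h (rZ N))).
  { intros eps He.
    destruct (pow_small r (eps * (1 - r) / (4 * C + 1)) Hr) as [N0 HN].
    { apply Rmult_gt_0_compat. nra. apply Rinv_0_lt_compat. lra. }
    exists N0. intros n m Hn Hm. unfold Rdist.
    assert (T : forall k, (k >= N0)%nat -> Rabs (sum1 h (rZ k) - sum1 h (rZ N0)) <= C * (2 * r ^ N0 / (1 - r))).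
    { intros k Hk. eapply Rle_trans. apply (sum1_diff h C r N0 k Hr Hb Hk).
      apply Rmult_le_compat_l. lra. apply G_diff; auto. }
    pose proof (T n Hn). pose proof (T m Hm). specialize (HN N0 (le_n _)).
    replace (sum1 h (rZ n) - sum1 h (rZ m)) with
      ((sum1 h (rZ n) - sum1 h (rZ N0)) - (sum1 h (rZ m) - sum1 h (rZ N0))) by ring.
    eapply Rle_lt_trans. apply abs_sub_le.
    assert (0 < 1 - r) by lra.
    assert (C * (2 * r ^ N0 / (1 - r)) < eps / 2).
    { apply (Rmult_lt_reg_r (1 - r)); auto. unfold Rdiv. field_simplify; try lra.
      assert (r ^ N0 * (4 * C + 1) < eps * (1 - r)).
      { apply (Rmult_lt_reg_r (/ (4 * C + 1))). apply Rinv_0_lt_compat; lra.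
        rewrite Rmult_assoc, Rinv_r by lra. lra. }
      assert (0 <= r ^ N0) by (apply pow_le; lra). nra. }
    lra. }
  destruct (R_complete _ Hc) as [l Hl]. eauto.
Qed.

Definition CCV (u : nat -> Cplx) (l : Cplx) : Prop :=
  Un_cv (fun N => Cre (u N)) (Cre l) /\ Un_cv (fun N => Cim (u N)) (Cim l).

Definition norm1 (a : Cplx) : R := Rabs (Cre a) + Rabs (Cim a).

Lemma Cnorm_ge_re a : Rabs (Cre a) <= Cnorm a.
Proof.
  unfold Cnorm. rewrite <- sqrt_Rsqr_abs. apply sqrt_le_1_alt. unfold Rsqr.
  pose proof (Rle_0_sqr (Cim a)). unfold Rsqr in *. lra.
Qed.
Lemma Cnorm_ge_im a : Rabs (Cim a) <= Cnorm a.
Proof.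
  unfold Cnorm. rewrite <- sqrt_Rsqr_abs. apply sqrt_le_1_alt. unfold Rsqr.
  pose proof (Rle_0_sqr (Cre a)). unfold Rsqr in *. lra.
Qed.
Lemma Cnorm_le a : Cnorm a <= Rabs (Cre a) + Rabs (Cim a).
Proof.
  unfold Cnorm. rewrite <- (sqrt_square (Rabs (Cre a) + Rabs (Cim a))).
  2: { pose proof (Rabs_pos (Cre a)); pose proof (Rabs_pos (Cim a)); lra. }
  apply sqrt_le_1_alt.
  pose proof (Rabs_pos (Cre a)); pose proof (Rabs_pos (Cim a)).
  assert (Cre a * Cre a = Rabs (Cre a) * Rabs (Cre a)) by (rewrite <- Rabs_mult; unfold Rabs; destruct Rcase_abs; nra).
  assert (Cim a * Cim a = Rabs (Cim a) * Rabs (Cim a)) by (rewrite <- Rabs_mult; unfold Rabs; destruct Rcase_abs; nra).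
  nra.
Qed.

Lemma Zsum_eq f l : CCV (Zpsum f) l -> Zsum f = l.
Proof.
  intros [Hr Hi].
  assert (Hcv : Zseries_cv f l).
  { intros eps He.
    destruct (Hr (eps/2)) as [N1 H1]. lra. destruct (Hi (eps/2)) as [N2 H2]. lra.
    exists (Nat.max N1 N2). intros N HN.
    specialize (H1 N ltac:(lia)). specialize (H2 N ltac:(lia)). unfold R_dist in *.
    eapply Rle_lt_trans. apply Cnorm_le. simpl. unfold Rminus in *. lra. }
  assert (Hz : Zseries_cv f (Zsum f)).
  { unfold Zsum. apply epsilon_spec. eauto. }
  apply Ceq.
  - apply (UL_sequence (fun N => Cre (Zpsum f N))); auto.
    intros eps He. destruct (Hz eps He) as [N0 H0]. exists N0. intros n Hn.
    specialize (H0 n Hn). unfold R_dist. eapply Rle_lt_trans. 2: apply H0.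
    pose proof (Cnorm_ge_re (Csub (Zpsum f n) (Zsum f))). simpl in H. unfold Rminus. lra.
  - apply (UL_sequence (fun N => Cim (Zpsum f N))); auto.
    intros eps He. destruct (Hz eps He) as [N0 H0]. exists N0. intros n Hn.
    specialize (H0 n Hn). unfold R_dist. eapply Rle_lt_trans. 2: apply H0.
    pose proof (Cnorm_ge_im (Csub (Zpsum f n) (Zsum f))). simpl in H. unfold Rminus. lra.
Qed.

Definition Bnd (f : Z -> Cplx) : Prop :=
  exists C r, 0 < C /\ 0 <= r < 1 /\ forall n, norm1 (f n) <= C * pw r n.

Lemma Bnd_conv f : Bnd f -> CCV (Zpsum f) (Zsum f).
Proof.
  intros (C & r & HC & Hr & Hb).
  destruct (conv1 (fun n => Cre (f n)) C r Hr HC) as [l1 H1].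
  { intro n. specialize (Hb n). unfold norm1 in Hb. pose proof (Rabs_pos (Cim (f n))). lra. }
  destruct (conv1 (fun n => Cim (f n)) C r Hr HC) as [l2 H2].
  { intro n. specialize (Hb n). unfold norm1 in Hb. pose proof (Rabs_pos (Cre (f n))). lra. }
  assert (CCV (Zpsum f) (mkC l1 l2)).
  { split; simpl.
    - replace (fun N => Cre (Zpsum f N)) with (fun N => sum1 (fun n => Cre (f n)) (rZ N)); auto.
      apply functional_extensionality; intro; symmetry; apply Zpsum_Re.
    - replace (fun N => Cim (Zpsum f N)) with (fun N => sum1 (fun n => Cim (f n)) (rZ N)); auto.
      apply functional_extensionality; intro; symmetry; apply Zpsum_Im. }
  rewrite (Zsum_eq f (mkC l1 l2)); auto.
Qed.

Lemma Cexp_add a b : Cmul (Cexp a) (Cexp b) = Cexp (Cadd a b).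
Proof.
  apply Ceq; simpl; rewrite exp_plus; [rewrite cos_plus | rewrite sin_plus]; ring.
Qed.

Lemma cs_2PIZ x k : cos (x + 2 * PI * IZR k) = cos x /\ sin (x + 2 * PI * IZR k) = sin x.
Proof.
  destruct (Z_le_gt_dec 0 k) as [Hk|Hk].
  - replace k with (Z.of_nat (Z.to_nat k)) by lia. rewrite <- INR_IZR_INZ.
    replace (x + 2 * PI * INR (Z.to_nat k)) with (x + 2 * INR (Z.to_nat k) * PI) by ring.
    split; [apply cos_period | apply sin_period].
  - replace k with (- Z.of_nat (Z.to_nat (- k)))%Z by lia. rewrite opp_IZR, <- INR_IZR_INZ.
    set (y := x + 2 * PI * - INR (Z.to_nat (- k))).
    assert (Hx : x = y + 2 * INR (Z.to_nat (- k)) * PI) by (unfold y; ring).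
    clearbody y. subst x. split; symmetry; [apply cos_period | apply sin_period].
Qed.

Lemma Cexp_per a b k : Cre a = Cre b -> Cim a = Cim b + 2 * PI * IZR k -> Cexp a = Cexp b.
Proof.
  intros H1 H2. destruct (cs_2PIZ (Cim b) k) as [c s].
  apply Ceq; simpl; rewrite H1, H2; [rewrite c | rewrite s]; auto.
Qed.

Lemma Cexp_anti a b k : Cre a = Cre b -> Cim a = Cim b + 2 * PI * IZR k + PI -> Cexp a = Copp (Cexp b).
Proof.
  intros H1 H2. destruct (cs_2PIZ (Cim b) k) as [c s].
  apply Ceq; simpl; rewrite H1, H2; [rewrite cos_plus, c, s, cos_PI, sin_PI | rewrite sin_plus, s, c, cos_PI, sin_PI]; ring.
Qed.

Lemma exp_pow_neg k : exp (-1) ^ k = exp (- INR k).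
Proof.
  induction k. simpl. rewrite Ropp_0, exp_0. auto.
  simpl pow. rewrite IHk, S_INR, <- exp_plus. f_equal. ring.
Qed.

Lemma norm1_Cexp a : norm1 (Cexp a) <= 2 * exp (Cre a).
Proof.
  unfold norm1, Cexp; simpl. pose proof (exp_pos (Cre a)).
  rewrite !Rabs_mult, (Rabs_right (exp (Cre a))) by lra.
  pose proof (COS_bound (Cim a)). pose proof (SIN_bound (Cim a)).
  assert (Rabs (cos (Cim a)) <= 1) by (unfold Rabs; destruct Rcase_abs; lra).
  assert (Rabs (sin (Cim a)) <= 1) by (unfold Rabs; destruct Rcase_abs; lra).
  nra.
Qed.

Lemma gauss_ineq t y e x : t > 0 ->
  let m := x + e / 2 in
  let b := 2 * PI * Rabs y + 1 in
  - (2 * PI) * (/ 2 * (m * m) * t + m * y) <= b * b / (4 * PI * t) + Rabs e / 2 - Rabs x.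
Proof.
  intros Ht m b. pose proof PI_RGT_0.
  assert (Hx : Rabs x <= Rabs m + Rabs e / 2).
  { replace x with (m - e / 2) by (unfold m; ring).
    eapply Rle_trans. apply abs_sub_le. unfold Rdiv; rewrite Rabs_mult, (Rabs_right (/2)) by lra. lra. }
  assert (Hy : - (y * m) <= Rabs y * Rabs m).
  { rewrite <- Rabs_mult. pose proof (Rle_abs (-(y*m))). rewrite Rabs_Ropp in H0. lra. }
  assert (Hm : m * m = Rabs m * Rabs m) by (rewrite <- Rabs_mult; unfold Rabs; destruct Rcase_abs; nra).
  set (u := Rabs m) in *.
  assert (Hsq : PI * t * u * u - b * u + b * b / (4 * PI * t) = PI * t * (u - b / (2 * PI * t)) * (u - b / (2 * PI * t))).
  { field. nra. }
  assert (0 <= PI * t * (u - b / (2 * PI * t)) * (u - b / (2 * PI * t))).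
  { rewrite Rmult_assoc. apply Rmult_le_pos. nra. apply Rle_0_sqr. }
  assert (H2 : -(2*PI)*(y*m) <= 2*PI*(Rabs y * u)) by nra.
  replace (- (2 * PI) * (/ 2 * (m * m) * t + m * y)) with (- (PI * t * (m*m)) + -(2*PI)*(y*m)) by field.
  rewrite Hm.
  assert (PI * t * u * u - b * u + b * b / (4 * PI * t) >= 0) by lra.
  unfold b in *.
  replace (PI * t * (u * u)) with (PI * t * u * u) by ring. lra.
Qed.

Lemma exp_m1 : 0 <= exp (-1) < 1.
Proof. split. left; apply exp_pos. rewrite <- exp_0. apply exp_increasing. lra. Qed.

Lemma theta_Bnd' e e' zeta tau : in_H2 tau -> exists C, 0 < C /\ forall n, norm1 (theta_term e e' zeta tau n) <= C * pw (exp (-1)) n.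
Proof.
  intro Ht. unfold in_H2 in Ht.
  set (b := 2 * PI * Rabs (Cim zeta) + 1).
  set (K := b * b / (4 * PI * Cim tau) + Rabs e / 2).
  exists (2 * exp K). split.
  - pose proof (exp_pos K); lra.
  - intro n. unfold pw. rewrite exp_pow_neg.
    eapply Rle_trans. apply norm1_Cexp. rewrite Rmult_assoc, <- exp_plus.
    apply Rmult_le_compat_l. lra.
    assert (INR (Z.abs_nat n) = Rabs (IZR n)).
    { rewrite INR_IZR_INZ, Nat2Z.inj_abs_nat, abs_IZR. auto. }
    rewrite H.
    assert (Hre : Cre (Cmul (Cmul (RtoC (2 * PI)) Ci)
       (Cadd (Cmul (RtoC (/ 2 * ((IZR n + e / 2) * (IZR n + e / 2)))) tau)
          (Cmul (RtoC (IZR n + e / 2)) (Cadd zeta (RtoC (e' / 2))))))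
       = - (2 * PI) * (/ 2 * ((IZR n + e / 2) * (IZR n + e / 2)) * Cim tau + (IZR n + e / 2) * Cim zeta)).
    { simpl. ring. }
    unfold theta_term. cbv zeta. rewrite Hre.
    pose proof (gauss_ineq (Cim tau) (Cim zeta) e (IZR n) Ht). cbv zeta in H0.
    match goal with |- exp ?a <= exp ?c => assert (Hl : a <= c) end.
    { unfold K, b. lra. }
    destruct Hl as [Hl|Hl]; [left; apply exp_increasing; auto | rewrite Hl; right; auto].
Qed.

Lemma theta_Bnd e e' zeta tau : in_H2 tau -> Bnd (theta_term e e' zeta tau).
Proof.
  intro Ht. destruct (theta_Bnd' e e' zeta tau Ht) as [C [HC Hb]].
  exists C, (exp (-1)). split; auto. split; auto. apply exp_m1.
Qed.

Definition sumL (h : Z * Z -> R) (l : list (Z * Z)) : R := fold_right (fun x acc => h x + acc) 0 l.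

Lemma sumL_app h l1 l2 : sumL h (l1 ++ l2) = sumL h l1 + sumL h l2.
Proof. induction l1; simpl; [ring | rewrite IHl1; ring]. Qed.

Lemma sumL_filter h f l : sumL h l = sumL h (filter f l) + sumL h (filter (fun x => negb (f x)) l).
Proof. induction l; simpl. ring. destruct (f a); simpl; rewrite IHl; ring. Qed.

Lemma sumL_perm h l l' : Permutation l l' -> sumL h l = sumL h l'.
Proof. induction 1; simpl; try ring; auto. rewrite IHPermutation; auto. congruence. Qed.

Definition pdec : forall x y : Z * Z, {x = y} + {x <> y}.
Proof. decide equality; apply Z.eq_dec. Defined.

Lemma sumL_remove_le g a l : (forall x, 0 <= g x) -> sumL g (remove pdec a l) <= sumL g l.
Proof.
  intro Hg. induction l; simpl. lra.
  destruct (pdec a a0); simpl. pose proof (Hg a0). lra. lra.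
Qed.

Lemma sumL_remove g a l : (forall x, 0 <= g x) -> In a l -> g a + sumL g (remove pdec a l) <= sumL g l.
Proof.
  intros Hg Ha. induction l; simpl in *. tauto.
  destruct (pdec a a0).
  - subst. pose proof (sumL_remove_le g a0 l Hg). lra.
  - simpl. destruct Ha as [Ha|Ha]. congruence. specialize (IHl Ha). lra.
Qed.

Lemma sumL_incl_le g l l' : (forall x, 0 <= g x) -> NoDup l -> incl l l' -> sumL g l <= sumL g l'.
Proof.
  intros Hg. revert l'. induction l; intros l' Hnd Hi; simpl.
  - induction l'; simpl. lra. pose proof (Hg a). assert (0 <= sumL g l') by (apply IHl'; intros x []). lra.
  - inversion Hnd; subst.
    assert (sumL g l <= sumL g (remove pdec a l')).
    { apply IHl; auto. intros x Hx. apply in_in_remove. intro; subst; auto.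
      apply Hi; simpl; auto. }
    pose proof (sumL_remove g a l' Hg (Hi a (or_introl eq_refl))). lra.
Qed.

Lemma sumL_abs h g l : (forall x, Rabs (h x) <= g x) -> Rabs (sumL h l) <= sumL g l.
Proof.
  intro Hb. induction l; simpl. rewrite Rabs_R0; lra.
  eapply Rle_trans. apply Rabs_triang. specialize (Hb a). lra.
Qed.

Lemma sumL_prod u v A B : sumL (fun p => u (fst p) * v (snd p)) (list_prod A B) = sum1 u A * sum1 v B.
Proof.
  induction A; simpl. ring. rewrite sumL_app, IHA.
  assert (sumL (fun p => u (fst p) * v (snd p)) (map (fun y => (a, y)) B) = u a * sum1 v B).
  { clear IHA. induction B; simpl. ring. rewrite IHB. ring. }
  rewrite H. ring.
Qed.

Lemma In_rZ x N : In x (rZ N) <-> (Z.abs x <= Z.of_nat N)%Z.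
Proof.
  induction N; simpl.
  - split. intros [H|[]]; subst; simpl; lia. intro; left; lia.
  - rewrite in_app_iff, IHN. simpl. split.
    + intros [H|[H|[H|[]]]]; lia.
    + intro H. destruct (Z_le_gt_dec (Z.abs x) (Z.of_nat N)). left; auto.
      right. destruct (Z_le_gt_dec 0 x); [left|right;left]; lia.
Qed.

Lemma NoDup_rZ N : NoDup (rZ N).
Proof.
  induction N; simpl. constructor. simpl; tauto. constructor.
  apply NoDup_app; auto.
  - constructor. simpl. lia. constructor. simpl; tauto. constructor.
  - intros a Ha. apply In_rZ in Ha. simpl. lia.
Qed.

Lemma NoDup_prod (A B : list Z) : NoDup A -> NoDup B -> NoDup (list_prod A B).
Proof.
  intros HA HB. induction HA; simpl. constructor.
  apply NoDup_app; auto.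
  - apply FinFun.Injective_map_NoDup; auto. intros u v E. congruence.
  - intros a Ha Hb. apply in_map_iff in Ha. destruct Ha as [y [E _]]. subst.
    apply in_prod_iff in Hb. tauto.
Qed.

Definition box (N : nat) : list (Z * Z) := list_prod (rZ N) (rZ N).
Definition inbox (N : nat) (p : Z * Z) : bool :=
  andb (Z.abs (fst p) <=? Z.of_nat N)%Z (Z.abs (snd p) <=? Z.of_nat N)%Z.

Lemma In_box N p : In p (box N) <-> inbox N p = true.
Proof.
  destruct p as [a b]. unfold box, inbox. rewrite in_prod_iff, !In_rZ. simpl.
  rewrite Bool.andb_true_iff, !Z.leb_le. tauto.
Qed.

Lemma NoDup_box N : NoDup (box N).
Proof. apply NoDup_prod; apply NoDup_rZ. Qed.

Lemma cmp_lemma h g L1 L2 K Lb :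
  (forall x, Rabs (h x) <= g x) ->
  NoDup L1 -> NoDup L2 -> incl (box K) L1 -> incl (box K) L2 ->
  incl L1 (box Lb) -> incl L2 (box Lb) ->
  Rabs (sumL h L1 - sumL h L2) <= 2 * (sumL g (box Lb) - sumL g (box K)).
Proof.
  intros Hb N1 N2 I1 I2 J1 J2.
  assert (Hg : forall x, 0 <= g x) by (intro x; pose proof (Hb x); pose proof (Rabs_pos (h x)); lra).
  assert (Key : forall L, NoDup L -> incl (box K) L -> incl L (box Lb) ->
     Rabs (sumL h L - sumL h (box K)) <= sumL g (box Lb) - sumL g (box K)).
  { intros L NL IL JL.
    assert (P1 : forall L', NoDup L' -> incl (box K) L' -> Permutation (filter (inbox K) L') (box K)).
    { intros L' NL' IL'. apply NoDup_Permutation. apply NoDup_filter; auto. apply NoDup_box.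
      intro x. rewrite filter_In, In_box. split. tauto. intro H; split; auto. apply IL'. apply In_box; auto. }
    rewrite (sumL_filter h (inbox K) L), (sumL_perm h _ _ (P1 L NL IL)).
    rewrite (sumL_filter g (inbox K) (box Lb)), (sumL_perm g _ _ (P1 (box Lb) (NoDup_box Lb) (fun x Hx => JL x (IL x Hx)))).
    replace (sumL h (box K) + sumL h (filter (fun x => negb (inbox K x)) L) - sumL h (box K))
      with (sumL h (filter (fun x => negb (inbox K x)) L)) by ring.
    replace (sumL g (box K) + sumL g (filter (fun x => negb (inbox K x)) (box Lb)) - sumL g (box K))
      with (sumL g (filter (fun x => negb (inbox K x)) (box Lb))) by ring.
    eapply Rle_trans. apply sumL_abs with (g := g); auto.
    apply sumL_incl_le; auto. apply NoDup_filter; auto.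
    intros x Hx. apply filter_In in Hx. apply filter_In. destruct Hx. split; auto. }
  pose proof (Key L1 N1 I1 J1). pose proof (Key L2 N2 I2 J2).
  replace (sumL h L1 - sumL h L2) with ((sumL h L1 - sumL h (box K)) - (sumL h L2 - sumL h (box K))) by ring.
  eapply Rle_trans. apply abs_sub_le. lra.
Qed.

Lemma CCV_mul u v l1 l2 : CCV u l1 -> CCV v l2 -> CCV (fun N => Cmul (u N) (v N)) (Cmul l1 l2).
Proof.
  intros [H1 H2] [H3 H4]. split; simpl.
  - apply CV_minus; apply CV_mult; auto.
  - apply CV_plus; apply CV_mult; auto.
Qed.
Lemma CCV_add u v l1 l2 : CCV u l1 -> CCV v l2 -> CCV (fun N => Cadd (u N) (v N)) (Cadd l1 l2).
Proof. intros [H1 H2] [H3 H4]. split; simpl; apply CV_plus; auto. Qed.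

Lemma lim_eq u v a b : Un_cv u a -> Un_cv v b ->
  (forall eps, eps > 0 -> exists N0, forall N, (N >= N0)%nat -> Rabs (u N - v N) < eps) -> a = b.
Proof.
  intros Hu Hv Hd.
  assert (Un_cv (fun N => u N - v N) (a - b)) by (apply CV_minus; auto).
  assert (Un_cv (fun N => u N - v N) 0).
  { intros eps He. destruct (Hd eps He) as [N0 H0]. exists N0. intros n Hn.
    unfold R_dist. rewrite Rminus_0_r. auto. }
  pose proof (UL_sequence _ _ _ H H0). lra.
Qed.

Lemma sumL_ext h1 h2 l : (forall x, h1 x = h2 x) -> sumL h1 l = sumL h2 l.
Proof. intro E. induction l; simpl; auto. rewrite E, IHl; auto. Qed.
Lemma sumL_map h f l : sumL h (map f l) = sumL (fun x => h (f x)) l.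
Proof. induction l; simpl; auto. rewrite IHl; auto. Qed.
Lemma sumL_minus h1 h2 l : sumL (fun x => h1 x - h2 x) l = sumL h1 l - sumL h2 l.
Proof. induction l; simpl. ring. rewrite IHl; ring. Qed.
Lemma sumL_plus h1 h2 l : sumL (fun x => h1 x + h2 x) l = sumL h1 l + sumL h2 l.
Proof. induction l; simpl. ring. rewrite IHl; ring. Qed.
Lemma sumL_scal c h l : sumL (fun x => c * h x) l = c * sumL h l.
Proof. induction l; simpl. ring. rewrite IHl; ring. Qed.

Lemma Re_prod u v N : Cre (Cmul (Zpsum u N) (Zpsum v N)) =
  sumL (fun p => Cre (Cmul (u (fst p)) (v (snd p)))) (box N).
Proof.
  simpl. rewrite !Zpsum_Re, !Zpsum_Im. unfold box.
  rewrite <- !sumL_prod, <- sumL_minus. apply sumL_ext. intros; simpl; ring.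
Qed.
Lemma Im_prod u v N : Cim (Cmul (Zpsum u N) (Zpsum v N)) =
  sumL (fun p => Cim (Cmul (u (fst p)) (v (snd p)))) (box N).
Proof.
  simpl. rewrite !Zpsum_Re, !Zpsum_Im. unfold box.
  rewrite <- !sumL_prod, <- sumL_plus. apply sumL_ext. intros; simpl; ring.
Qed.

Definition phi (p : Z * Z) : Z * Z := ((fst p + snd p)%Z, (fst p - snd p - 1)%Z).
Definition psi (p : Z * Z) : Z * Z := ((fst p + snd p)%Z, (fst p - snd p)%Z).

Lemma L2_nodup N : NoDup (map phi (box N) ++ map psi (box N)).
Proof.
  apply NoDup_app.
  - apply FinFun.Injective_map_NoDup. 2: apply NoDup_box.
    intros [a b] [c d] E. unfold phi in E; simpl in E. injection E; intros. f_equal; lia.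
  - apply FinFun.Injective_map_NoDup. 2: apply NoDup_box.
    intros [a b] [c d] E. unfold psi in E; simpl in E. injection E; intros. f_equal; lia.
  - intros q H1 H2. apply in_map_iff in H1, H2.
    destruct H1 as [[a b] [E1 _]]. destruct H2 as [[c d] [E2 _]].
    subst. unfold phi, psi in E2; simpl in E2. injection E2; intros. lia.
Qed.

Lemma inbox_iff N p : inbox N p = true <-> (Z.abs (fst p) <= Z.of_nat N /\ Z.abs (snd p) <= Z.of_nat N)%Z.
Proof. unfold inbox. rewrite Bool.andb_true_iff, !Z.leb_le. tauto. Qed.

Lemma L2_incl1 N : incl (box N) (map phi (box N) ++ map psi (box N)).
Proof.
  intros [n m] H. apply In_box, inbox_iff in H. simpl in H. apply in_app_iff.
  destruct (Zeven_odd_dec (n - m)) as [He|Ho].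
  - apply Zeven_ex in He. destruct He as [j Hj]. right. apply in_map_iff.
    exists ((n - j)%Z, j). split. unfold psi; simpl; f_equal; lia.
    apply In_box, inbox_iff. simpl. lia.
  - apply Zodd_ex in Ho. destruct Ho as [j Hj]. left. apply in_map_iff.
    exists ((n - j)%Z, j). split. unfold phi; simpl; f_equal; lia.
    apply In_box, inbox_iff. simpl. lia.
Qed.

Lemma L2_incl2 N : incl (map phi (box N) ++ map psi (box N)) (box (2 * N + 1)).
Proof.
  intros q H. apply in_app_iff in H. apply In_box, inbox_iff.
  destruct H as [H|H]; apply in_map_iff in H; destruct H as [[k l] [E H]]; subst;
  apply In_box, inbox_iff in H; simpl in *; lia.
Qed.

Lemma box_incl N : incl (box N) (box (2 * N + 1)).
Proof. intros q H. apply In_box, inbox_iff in H. apply In_box, inbox_iff. lia. Qed.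

Lemma Re_mul_bound u v : Rabs (Cre (Cmul u v)) <= norm1 u * norm1 v.
Proof.
  unfold norm1; simpl. eapply Rle_trans. apply abs_sub_le. rewrite !Rabs_mult.
  pose proof (Rabs_pos (Cre u)); pose proof (Rabs_pos (Cim u));
  pose proof (Rabs_pos (Cre v)); pose proof (Rabs_pos (Cim v)). nra.
Qed.
Lemma Im_mul_bound u v : Rabs (Cim (Cmul u v)) <= norm1 u * norm1 v.
Proof.
  unfold norm1; simpl. eapply Rle_trans. apply Rabs_triang. rewrite !Rabs_mult.
  pose proof (Rabs_pos (Cre u)); pose proof (Rabs_pos (Cim u));
  pose proof (Rabs_pos (Cre v)); pose proof (Rabs_pos (Cim v)). nra.
Qed.

Lemma G_bound r L : 0 <= r < 1 -> G r L <= (1 + r) / (1 - r).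
Proof.
  intros Hr. rewrite G_closed by lra. assert (0 <= r ^ S L) by (apply pow_le; lra).
  unfold Rdiv. apply Rmult_le_compat_r. left; apply Rinv_0_lt_compat; lra. lra.
Qed.

Lemma box_tail (h : Z * Z -> R) Ca Cb r :
  0 < Ca -> 0 < Cb -> 0 <= r < 1 ->
  (forall p, Rabs (h p) <= Ca * Cb * (pw r (fst p) * pw r (snd p))) ->
  forall L1 L2 : nat -> list (Z * Z),
  (forall N, NoDup (L1 N) /\ NoDup (L2 N) /\ incl (box N) (L1 N) /\ incl (box N) (L2 N)
     /\ incl (L1 N) (box (2 * N + 1)) /\ incl (L2 N) (box (2 * N + 1))) ->
  forall eps, eps > 0 -> exists N0, forall N, (N >= N0)%nat -> Rabs (sumL h (L1 N) - sumL h (L2 N)) < eps.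
Proof.
  intros HCa HCb Hr Hb L1 L2 HL eps He.
  set (D := 2 * (Ca * Cb) * (2 / (1 - r) * (2 * (1 + r) / (1 - r)))).
  assert (HD : 0 < D).
  { unfold D. assert (0 < 1 - r) by lra. apply Rmult_lt_0_compat. nra.
    apply Rmult_lt_0_compat; unfold Rdiv; apply Rmult_lt_0_compat; try lra; apply Rinv_0_lt_compat; lra. }
  destruct (pow_small r (eps / D) Hr) as [N0 HN0].
  { unfold Rdiv. apply Rmult_lt_0_compat; auto. apply Rinv_0_lt_compat; auto. }
  exists N0. intros N HN. specialize (HN0 N HN).
  destruct (HL N) as (A1 & A2 & A3 & A4 & A5 & A6).
  eapply Rle_lt_trans. apply (cmp_lemma h _ _ _ N (2 * N + 1) Hb); auto.
  assert (Hs : forall L, sumL (fun p => Ca * Cb * (pw r (fst p) * pw r (snd p))) (box L) = Ca * Cb * (G r L * G r L)).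
  { intro L. rewrite sumL_scal. unfold box. rewrite (sumL_prod (pw r) (pw r)). reflexivity. }
  rewrite !Hs.
  pose proof (G_diff r N (2 * N + 1) Hr ltac:(lia)).
  pose proof (G_bound r N Hr). pose proof (G_bound r (2 * N + 1) Hr).
  pose proof (G_nonneg r N ltac:(lra)). pose proof (G_nonneg r (2*N+1) ltac:(lra)).
  set (g1 := G r N) in *. set (g2 := G r (2 * N + 1)) in *.
  assert (g2 * g2 - g1 * g1 <= (2 * r ^ N / (1 - r)) * (2 * (1 + r) / (1 - r))).
  { replace (g2 * g2 - g1 * g1) with ((g2 - g1) * (g2 + g1)) by ring.
    apply Rmult_le_compat; lra. }
  assert (2 * (Ca * Cb * (g2 * g2) - Ca * Cb * (g1 * g1)) <= D * r ^ N).
  { unfold D. replace (2 * r ^ N / (1 - r) * (2 * (1 + r) / (1 - r))) with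
      (r ^ N * (2 / (1 - r) * (2 * (1 + r) / (1 - r)))) in H3 by (field; lra).
    assert (0 < Ca * Cb) by nra. nra. }
  assert (D * r ^ N < eps).
  { apply (Rmult_lt_compat_l D) in HN0; auto. unfold Rdiv in HN0.
    rewrite <- Rmult_assoc, (Rmult_comm D eps), Rmult_assoc, Rinv_r, Rmult_1_r in HN0; lra. }
  lra.
Qed.

Lemma Cre_add u v : Cre (Cadd u v) = Cre u + Cre v.
Proof. reflexivity. Qed.
Lemma Cim_add u v : Cim (Cadd u v) = Cim u + Cim v.
Proof. reflexivity. Qed.

Lemma prod_gen (a b al be be' al' : Z -> Cplx) Ca Cb r :
  0 < Ca -> 0 < Cb -> 0 <= r < 1 ->
  (forall n, norm1 (a n) <= Ca * pw r n) -> (forall n, norm1 (b n) <= Cb * pw r n) ->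
  Bnd a -> Bnd b -> Bnd al -> Bnd be -> Bnd be' -> Bnd al' ->
  (forall k l, Cmul (a (k + l)%Z) (b (k - l - 1)%Z) = Cmul (al k) (be l)) ->
  (forall k l, Cmul (a (k + l)%Z) (b (k - l)%Z) = Cmul (be' k) (al' l)) ->
  Cmul (Zsum a) (Zsum b) = Cadd (Cmul (Zsum al) (Zsum be)) (Cmul (Zsum be') (Zsum al')).
Proof.
  intros HCa HCb Hr Ha Hb Ba Bb Bal Bbe Bbe' Bal' T1 T2.
  pose proof (CCV_mul _ _ _ _ (Bnd_conv _ Ba) (Bnd_conv _ Bb)) as CP.
  pose proof (CCV_add _ _ _ _ (CCV_mul _ _ _ _ (Bnd_conv _ Bal) (Bnd_conv _ Bbe))
                              (CCV_mul _ _ _ _ (Bnd_conv _ Bbe') (Bnd_conv _ Bal'))) as CQ.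
  destruct CP as [CP1 CP2]. destruct CQ as [CQ1 CQ2].
  set (w := fun p : Z * Z => Cmul (a (fst p)) (b (snd p))).
  assert (HL : forall N, NoDup (box N) /\ NoDup (map phi (box N) ++ map psi (box N)) /\
      incl (box N) (box N) /\ incl (box N) (map phi (box N) ++ map psi (box N)) /\
      incl (box N) (box (2 * N + 1)) /\ incl (map phi (box N) ++ map psi (box N)) (box (2 * N + 1))).
  { intro N. repeat split; auto using NoDup_box, L2_nodup, incl_refl, L2_incl1, L2_incl2, box_incl. }
  assert (QR : forall N, Cre (Cadd (Cmul (Zpsum al N) (Zpsum be N)) (Cmul (Zpsum be' N) (Zpsum al' N))) =
     sumL (fun p => Cre (w p)) (map phi (box N) ++ map psi (box N))).
  { intro N. rewrite Cre_add. rewrite !Re_prod, sumL_app, !sumL_map. f_equal.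
    apply sumL_ext; intros [k l]; unfold w, phi; cbn [fst snd]; rewrite T1; auto.
    apply sumL_ext; intros [k l]; unfold w, psi; cbn [fst snd]; rewrite T2; auto. }
  assert (QI : forall N, Cim (Cadd (Cmul (Zpsum al N) (Zpsum be N)) (Cmul (Zpsum be' N) (Zpsum al' N))) =
     sumL (fun p => Cim (w p)) (map phi (box N) ++ map psi (box N))).
  { intro N. rewrite Cim_add. rewrite !Im_prod, sumL_app, !sumL_map. f_equal.
    apply sumL_ext; intros [k l]; unfold w, phi; cbn [fst snd]; rewrite T1; auto.
    apply sumL_ext; intros [k l]; unfold w, psi; cbn [fst snd]; rewrite T2; auto. }
  apply Ceq.
  - eapply lim_eq. apply CP1. apply CQ1. intros eps He.
    destruct (box_tail (fun p => Cre (w p)) Ca Cb r HCa HCb Hr) with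
      (L1 := box) (L2 := fun N => map phi (box N) ++ map psi (box N)) (eps := eps) as [N0 H0]; auto.
    { intros [n m]. unfold w. simpl fst; simpl snd. eapply Rle_trans. apply Re_mul_bound.
      pose proof (Ha n); pose proof (Hb m).
      assert (0 <= norm1 (a n)) by (unfold norm1; pose proof (Rabs_pos (Cre (a n))); pose proof (Rabs_pos (Cim (a n))); lra).
      assert (0 <= norm1 (b m)) by (unfold norm1; pose proof (Rabs_pos (Cre (b m))); pose proof (Rabs_pos (Cim (b m))); lra).
      replace (Ca * Cb * (pw r n * pw r m)) with ((Ca * pw r n) * (Cb * pw r m)) by ring.
      apply Rmult_le_compat; auto. }
    exists N0. intros N HN. rewrite Re_prod, QR. apply H0; auto.
  - eapply lim_eq. apply CP2. apply CQ2. intros eps He.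
    destruct (box_tail (fun p => Cim (w p)) Ca Cb r HCa HCb Hr) with
      (L1 := box) (L2 := fun N => map phi (box N) ++ map psi (box N)) (eps := eps) as [N0 H0]; auto.
    { intros [n m]. unfold w. simpl fst; simpl snd. eapply Rle_trans. apply Im_mul_bound.
      pose proof (Ha n); pose proof (Hb m).
      assert (0 <= norm1 (a n)) by (unfold norm1; pose proof (Rabs_pos (Cre (a n))); pose proof (Rabs_pos (Cim (a n))); lra).
      assert (0 <= norm1 (b m)) by (unfold norm1; pose proof (Rabs_pos (Cre (b m))); pose proof (Rabs_pos (Cim (b m))); lra).
      replace (Ca * Cb * (pw r n * pw r m)) with ((Ca * pw r n) * (Cb * pw r m)) by ring.
      apply Rmult_le_compat; auto. }
    exists N0. intros N HN. rewrite Im_prod, QI. apply H0; auto.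
Qed.

Definition dbl (tau : Cplx) : Cplx := mkC (2 * Cre tau) (2 * Cim tau).

Lemma PF x y tau : in_H2 tau ->
  Cmul (theta 1 0 x tau) (theta 1 0 y tau) =
  Cadd (Cmul (theta 0 0 (Cadd x y) (dbl tau)) (theta 1 0 (Csub x y) (dbl tau)))
       (Cmul (theta 1 0 (Cadd x y) (dbl tau)) (theta 0 0 (Csub x y) (dbl tau))).
Proof.
  intro Ht. assert (Ht2 : in_H2 (dbl tau)) by (unfold in_H2, dbl in *; simpl; lra).
  destruct (theta_Bnd' 1 0 x tau Ht) as [Ca [HCa Ha]].
  destruct (theta_Bnd' 1 0 y tau Ht) as [Cb [HCb Hb]].
  unfold theta. apply (prod_gen _ _ _ _ _ _ Ca Cb (exp (-1))); auto using exp_m1, theta_Bnd.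
  - intros k l. unfold theta_term. rewrite !Cexp_add. f_equal. apply Ceq; simpl;
    rewrite ?plus_IZR, ?minus_IZR; field.
  - intros k l. unfold theta_term. rewrite !Cexp_add. f_equal. apply Ceq; simpl;
    rewrite ?plus_IZR, ?minus_IZR; field.
Qed.

Lemma Zpsum_S f M : Zpsum f (S M) = Cadd (Zpsum f M) (Cadd (f (Z.of_nat (S M))) (f (- Z.of_nat (S M))%Z)).
Proof. reflexivity. Qed.

Lemma Aper s t : theta 0 0 (Cadd s (RtoC 1)) t = theta 0 0 s t.
Proof.
  unfold theta. f_equal. apply functional_extensionality. intro n. unfold theta_term.
  apply Cexp_per with (k := n); simpl; field.
Qed.

Lemma Zsum_opp f : Bnd f -> Zsum (fun n => Copp (f n)) = Copp (Zsum f).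
Proof.
  intro Hb. apply Zsum_eq. destruct (Bnd_conv f Hb) as [H1 H2].
  assert (E : forall N, Zpsum (fun n => Copp (f n)) N = Copp (Zpsum f N)).
  { induction N; simpl; auto. rewrite IHN. apply Ceq; simpl; ring. }
  split; simpl.
  - replace (fun N => Cre (Zpsum (fun n => Copp (f n)) N)) with (fun N => - Cre (Zpsum f N)).
    apply (CV_opp _ _ H1) || apply (CV_opp _ _ H2). apply functional_extensionality; intro N; rewrite E; auto.
  - replace (fun N => Cim (Zpsum (fun n => Copp (f n)) N)) with (fun N => - Cim (Zpsum f N)).
    apply (CV_opp _ _ H1) || apply (CV_opp _ _ H2). apply functional_extensionality; intro N; rewrite E; auto.
Qed.

Lemma Bper s t : in_H2 t -> theta 1 0 (Cadd s (RtoC 1)) t = Copp (theta 1 0 s t).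
Proof.
  intro Ht. unfold theta. rewrite <- Zsum_opp by (apply theta_Bnd; auto).
  f_equal. apply functional_extensionality. intro n. unfold theta_term.
  apply Cexp_anti with (k := n); simpl; field.
Qed.

Lemma Aev s t : in_H2 t -> theta 0 0 (Copp s) t = theta 0 0 s t.
Proof.
  intro Ht. unfold theta.
  set (f := theta_term 0 0 s t).
  assert (E : theta_term 0 0 (Copp s) t = fun n => f (- n)%Z).
  { apply functional_extensionality. intro n. unfold f, theta_term. f_equal.
    apply Ceq; simpl; rewrite ?opp_IZR; field. }
  rewrite E. apply Zsum_eq.
  assert (P : forall N, Zpsum (fun n => f (- n)%Z) N = Zpsum f N).
  { induction N. simpl; auto. simpl Zpsum. rewrite IHN. apply Ceq; cbn [Cre Cim Cadd]; ring. }
  destruct (Bnd_conv f (theta_Bnd _ _ _ _ Ht)) as [H1 H2].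
  split.
  - replace (fun N => Cre (Zpsum (fun n => f (- n)%Z) N)) with (fun N => Cre (Zpsum f N)); auto.
    apply functional_extensionality; intro N; rewrite P; auto.
  - replace (fun N => Cim (Zpsum (fun n => f (- n)%Z) N)) with (fun N => Cim (Zpsum f N)); auto.
    apply functional_extensionality; intro N; rewrite P; auto.
Qed.

Lemma Bnd_to0 f (idx : nat -> Z) : Bnd f -> (forall N, (N <= Z.abs_nat (idx N))%nat) ->
  Un_cv (fun N => Cre (f (idx N))) 0 /\ Un_cv (fun N => Cim (f (idx N))) 0.
Proof.
  intros (C & r & HC & Hr & Hb) Hi.
  assert (K : forall N, norm1 (f (idx N)) <= C * r ^ N).
  { intro N. eapply Rle_trans. apply Hb. apply Rmult_le_compat_l. lra. unfold pw.
    apply pow_decr; auto. lra. }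
  split; intros eps He; destruct (pow_small r (eps / C) Hr) as [N0 H0];
    try (unfold Rdiv; apply Rmult_lt_0_compat; auto; apply Rinv_0_lt_compat; auto);
    exists N0; intros n Hn; unfold R_dist; rewrite Rminus_0_r;
    specialize (H0 n Hn); specialize (K n); unfold norm1 in K;
    pose proof (Rabs_pos (Cre (f (idx n)))); pose proof (Rabs_pos (Cim (f (idx n))));
    assert (C * r ^ n < eps) by (apply (Rmult_lt_compat_l C) in H0; auto; unfold Rdiv in H0;
       rewrite (Rmult_comm eps), <- Rmult_assoc, Rinv_r, Rmult_1_l in H0; lra); lra.
Qed.

Lemma Bev s t : in_H2 t -> theta 1 0 (Copp s) t = theta 1 0 s t.
Proof.
  intro Ht. unfold theta.
  set (f := theta_term 1 0 s t).
  assert (E : theta_term 1 0 (Copp s) t = fun n => f (-1 - n)%Z).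
  { apply functional_extensionality. intro n. unfold f, theta_term. f_equal.
    apply Ceq; cbn [Cre Cim Cmul Cadd RtoC Ci Copp]; rewrite ?minus_IZR, ?opp_IZR; field. }
  rewrite E. apply Zsum_eq.
  assert (P : forall N, Zpsum (fun n => f (-1 - n)%Z) N =
     Cadd (Csub (Zpsum f N) (f (Z.of_nat N))) (f (- Z.of_nat N - 1)%Z)).
  { induction N.
    - simpl. apply Ceq; simpl; ring.
    - rewrite Zpsum_S, IHN.
      replace (-1 - Z.of_nat (S N))%Z with (- Z.of_nat (S N) - 1)%Z by lia.
      replace (-1 - - Z.of_nat (S N))%Z with (Z.of_nat N) by lia.
      replace (- Z.of_nat N - 1)%Z with (- Z.of_nat (S N))%Z by lia.
      apply Ceq; simpl; ring. }
  assert (Bf : Bnd f) by (apply theta_Bnd; auto).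
  destruct (Bnd_conv f Bf) as [H1 H2].
  destruct (Bnd_to0 f (fun N => Z.of_nat N) Bf) as [Z1 Z2]. intro; lia.
  destruct (Bnd_to0 f (fun N => (- Z.of_nat N - 1)%Z) Bf) as [Z3 Z4]. intro; lia.
  split.
  - replace (fun N => Cre (Zpsum (fun n => f (-1 - n)%Z) N)) with
      (fun N => Cre (Zpsum f N) - Cre (f (Z.of_nat N)) + Cre (f (- Z.of_nat N - 1)%Z)).
    replace (Cre (Zsum f)) with (Cre (Zsum f) - 0 + 0) by ring.
    apply CV_plus; auto. apply CV_minus; auto.
    apply functional_extensionality; intro N; rewrite P; simpl; ring.
  - replace (fun N => Cim (Zpsum (fun n => f (-1 - n)%Z) N)) with
      (fun N => Cim (Zpsum f N) - Cim (f (Z.of_nat N)) + Cim (f (- Z.of_nat N - 1)%Z)).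
    replace (Cim (Zsum f)) with (Cim (Zsum f) - 0 + 0) by ring.
    apply CV_plus; auto. apply CV_minus; auto.
    apply functional_extensionality; intro N; rewrite P; simpl; ring.
Qed.

Definition C1 : Cplx := RtoC 1.
Lemma Cring : ring_theory C0 C1 Cadd Cmul Csub Copp eq.
Proof.
  constructor; intros; apply Ceq; unfold C0, C1, RtoC, Cadd, Cmul, Csub, Copp; simpl; ring.
Qed.
Add Ring Cring : Cring.

Definition Aa tau r := theta 0 0 (RtoC r) (dbl tau).
Definition Bb tau r := theta 1 0 (RtoC r) (dbl tau).
Definition ac tau r := theta 0 0 (RtoC r) (dbl tau).
Definition bc tau r := theta 1 0 (RtoC r) (dbl tau).
Definition AS tau s := theta 0 0 s (dbl tau).
Definition BS tau s := theta 1 0 s (dbl tau).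

Lemma H2dbl tau : in_H2 tau -> in_H2 (dbl tau).
Proof. unfold in_H2, dbl; simpl; lra. Qed.

Lemma TH e' zeta tau : theta 1 e' zeta tau = theta 1 0 (Cadd zeta (RtoC (e' / 2))) tau.
Proof.
  unfold theta. f_equal. apply functional_extensionality. intro n. unfold theta_term. f_equal.
  apply Ceq; cbn [Cre Cim Cmul Cadd RtoC Ci]; field.
Qed.

Lemma PFz e1 e2 z tau : in_H2 tau ->
  Cmul (theta 1 e1 z tau) (theta 1 e2 z tau) =
  Cadd (Cmul (AS tau (Cadd (Cadd z z) (RtoC ((e1 + e2) / 2)))) (Bb tau ((e1 - e2) / 2)))
       (Cmul (BS tau (Cadd (Cadd z z) (RtoC ((e1 + e2) / 2)))) (Aa tau ((e1 - e2) / 2))).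
Proof.
  intro Ht. rewrite (TH e1), (TH e2), PF by auto. unfold AS, BS, Aa, Bb.
  replace (Cadd (Cadd z (RtoC (e1 / 2))) (Cadd z (RtoC (e2 / 2)))) with (Cadd (Cadd z z) (RtoC ((e1 + e2) / 2)))
    by (apply Ceq; cbn [Cre Cim Cadd RtoC]; field).
  replace (Csub (Cadd z (RtoC (e1 / 2))) (Cadd z (RtoC (e2 / 2)))) with (RtoC ((e1 - e2) / 2))
    by (apply Ceq; cbn [Cre Cim Cadd Csub Copp RtoC]; field).
  reflexivity.
Qed.

Lemma PFc e1 e2 tau : in_H2 tau ->
  Cmul (thetac 1 e1 tau) (thetac 1 e2 tau) =
  Cadd (Cmul (Aa tau ((e1 + e2) / 2)) (Bb tau ((e1 - e2) / 2)))
       (Cmul (Bb tau ((e1 + e2) / 2)) (Aa tau ((e1 - e2) / 2))).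
Proof.
  intro Ht. unfold thetac. rewrite PFz by auto. unfold AS, BS, Aa, Bb.
  replace (Cadd (Cadd C0 C0) (RtoC ((e1 + e2) / 2))) with (RtoC ((e1 + e2) / 2))
    by (apply Ceq; cbn [Cre Cim Cadd RtoC C0]; ring).
  reflexivity.
Qed.

Ltac cong6 := first [ left; lra | right; left; lra | right; right; left; lra
  | right; right; right; left; lra | right; right; right; right; left; lra | right; right; right; right; right; lra ].

Lemma a_cong tau r1 r2 : in_H2 tau ->
  (r1 = r2 \/ r1 = - r2 \/ r1 = r2 + 1 \/ r1 = - r2 + 1 \/ r1 = r2 - 1 \/ r1 = - r2 - 1) ->
  Aa tau r1 = ac tau r2.
Proof.
  intros Ht H. pose proof (H2dbl tau Ht) as Ht2. unfold Aa, ac.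
  assert (Ev : forall u, theta 0 0 (RtoC (- u)) (dbl tau) = theta 0 0 (RtoC u) (dbl tau)).
  { intro u. rewrite <- (Aev (RtoC u)) by auto. f_equal. apply Ceq; cbn [Cre Cim Copp RtoC]; ring. }
  assert (Pe : forall u, theta 0 0 (RtoC (u + 1)) (dbl tau) = theta 0 0 (RtoC u) (dbl tau)).
  { intro u. rewrite <- (Aper (RtoC u)). f_equal. apply Ceq; cbn [Cre Cim Cadd RtoC]; ring. }
  destruct H as [H|[H|[H|[H|[H|H]]]]]; subst r1.
  - reflexivity.
  - apply Ev.
  - rewrite Pe; auto.
  - rewrite Pe, Ev; auto.
  - replace r2 with ((r2 - 1) + 1) at 2 by ring. rewrite Pe. reflexivity.
  - replace (- r2 - 1) with (- (r2 + 1)) by ring. rewrite Ev, Pe. reflexivity.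
Qed.

Lemma b_cong_p tau r1 r2 : in_H2 tau -> (r1 = r2 \/ r1 = - r2) -> Bb tau r1 = bc tau r2.
Proof.
  intros Ht H. pose proof (H2dbl tau Ht) as Ht2. unfold Bb, bc.
  destruct H as [H|H]; subst r1. reflexivity.
  rewrite <- (Bev (RtoC r2)) by auto. f_equal. apply Ceq; cbn [Cre Cim Copp RtoC]; ring.
Qed.

Lemma b_cong_n tau r1 r2 : in_H2 tau ->
  (r1 = r2 + 1 \/ r1 = - r2 + 1 \/ r1 = r2 - 1 \/ r1 = - r2 - 1) -> Bb tau r1 = Copp (bc tau r2).
Proof.
  intros Ht H. pose proof (H2dbl tau Ht) as Ht2. unfold Bb, bc.
  assert (Ev : forall u, theta 1 0 (RtoC (- u)) (dbl tau) = theta 1 0 (RtoC u) (dbl tau)).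
  { intro u. rewrite <- (Bev (RtoC u)) by auto. f_equal. apply Ceq; cbn [Cre Cim Copp RtoC]; ring. }
  assert (Pe : forall u, theta 1 0 (RtoC (u + 1)) (dbl tau) = Copp (theta 1 0 (RtoC u) (dbl tau))).
  { intro u. rewrite <- (Bper (RtoC u)) by auto. f_equal. apply Ceq; cbn [Cre Cim Cadd RtoC]; ring. }
  destruct H as [H|[H|[H|H]]]; subst r1.
  - rewrite Pe; auto.
  - rewrite Pe, Ev; auto.
  - replace r2 with ((r2 - 1) + 1) at 2 by ring. rewrite Pe. ring.
  - rewrite <- (Ev r2). replace (- r2) with ((- r2 - 1) + 1) at 2 by ring. rewrite Pe. ring.
Qed.

Definition ASc tau s := theta 0 0 s (dbl tau).
Definition BSc tau s := theta 1 0 s (dbl tau).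

Lemma AS0 tau s r : r = 0 -> AS tau (Cadd s (RtoC r)) = ASc tau s.
Proof. intro; subst. unfold AS, ASc. f_equal. apply Ceq; cbn [Cre Cim Cadd RtoC]; ring. Qed.
Lemma AS1 tau s r : r = 1 -> AS tau (Cadd s (RtoC r)) = ASc tau s.
Proof. intro; subst. unfold AS, ASc. apply Aper. Qed.
Lemma BS0 tau s r : r = 0 -> BS tau (Cadd s (RtoC r)) = BSc tau s.
Proof. intro; subst. unfold BS, BSc. f_equal. apply Ceq; cbn [Cre Cim Cadd RtoC]; ring. Qed.
Lemma BS1 tau s r : in_H2 tau -> r = 1 -> BS tau (Cadd s (RtoC r)) = Copp (BSc tau s).
Proof. intros Ht H; subst. unfold BS, BSc. apply Bper. apply H2dbl; auto. Qed.

Lemma bc_half tau : in_H2 tau -> bc tau (1/2) = C0.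
Proof.
  intro Ht. pose proof (b_cong_n tau (1/2) (1/2) Ht ltac:(right; left; lra)) as H.
  change (Bb tau (1/2)) with (bc tau (1/2)) in H.
  destruct (bc tau (1/2)) as [u v]. injection H. intros. apply Ceq; cbn; lra.
Qed.

Ltac cong2 := first [ left; lra | right; lra ].
Ltac cong4 := first [ left; lra | right; left; lra | right; right; left; lra | right; right; right; lra ].

Ltac canon Ht x y w := repeat (match goal with
  | |- context [Aa ?t ?r] => first [ rewrite (a_cong t r 0 Ht) by cong6 | rewrite (a_cong t r x Ht) by cong6
        | rewrite (a_cong t r y Ht) by cong6 | rewrite (a_cong t r w Ht) by cong6 ]
  | |- context [Bb ?t ?r] => first [ rewrite (b_cong_p t r 0 Ht) by cong2 | rewrite (b_cong_p t r x Ht) by cong2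
        | rewrite (b_cong_p t r y Ht) by cong2 | rewrite (b_cong_p t r w Ht) by cong2
        | rewrite (b_cong_n t r 0 Ht) by cong4 | rewrite (b_cong_n t r x Ht) by cong4
        | rewrite (b_cong_n t r y Ht) by cong4 | rewrite (b_cong_n t r w Ht) by cong4 ]
  | |- context [AS ?t (Cadd ?s (RtoC ?r))] => first [ rewrite (AS0 t s r) by lra | rewrite (AS1 t s r) by lra ]
  | |- context [BS ?t (Cadd ?s (RtoC ?r))] => first [ rewrite (BS0 t s r) by lra | rewrite (BS1 t s r Ht) by lra ]
  end).

Theorem mainTheorem1 (z tau : Cplx) (Htau : in_H2 tau) :
  (* identity 1 *)
  Csub (Cadd
    (Cmul (Cpow2 (thetac 1 (1/2) tau)) (Cpow2 (theta 1 0 z tau)))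
    (Cmul (Cpow2 (thetac 1 0 tau))
          (Cmul (theta 1 (1/2) z tau) (theta 1 (3/2) z tau))))
    (Cmul (Cpow2 (thetac 1 (1/2) tau)) (Cpow2 (theta 1 1 z tau))) = C0
  /\
  (* identity 2 *)
  Cadd (Csub
    (Cmul (Cpow2 (thetac 1 (2/3) tau))
          (Cmul (theta 1 (1/3) z tau) (theta 1 (5/3) z tau)))
    (Cmul (Cpow2 (thetac 1 (1/3) tau))
          (Cmul (theta 1 (2/3) z tau) (theta 1 (4/3) z tau))))
    (Cmul (Cmul (thetac 1 0 tau) (thetac 1 (2/3) tau))
          (Cpow2 (theta 1 1 z tau))) = C0
  /\
  (* identity 3 *)
  Cadd (Csub
    (Cmul (Cpow2 (thetac 1 (3/4) tau))
          (Cmul (theta 1 (1/4) z tau) (theta 1 (7/4) z tau)))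
    (Cmul (Cpow2 (thetac 1 (1/4) tau))
          (Cmul (theta 1 (3/4) z tau) (theta 1 (5/4) z tau))))
    (Cmul (Cmul (thetac 1 0 tau) (thetac 1 (1/2) tau))
          (Cpow2 (theta 1 1 z tau))) = C0
  /\
  (* identity 4 *)
  Cadd (Csub
    (Cmul (Cpow2 (thetac 1 (3/5) tau))
          (Cmul (theta 1 (1/5) z tau) (theta 1 (9/5) z tau)))
    (Cmul (Cpow2 (thetac 1 (1/5) tau))
          (Cmul (theta 1 (3/5) z tau) (theta 1 (7/5) z tau))))
    (Cmul (Cmul (thetac 1 (1/5) tau) (thetac 1 (3/5) tau))
          (Cpow2 (theta 1 1 z tau))) = C0.
Proof.
  unfold Cpow2.
  repeat rewrite (PFc _ _ _ Htau). repeat rewrite (PFz _ _ _ _ Htau).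
  split; [|split; [|split]].
  - canon Htau (1/2) (1/2) (1/2). rewrite (bc_half _ Htau). ring.
  - canon Htau (1/3) (1/3) (1/3). ring.
  - canon Htau (1/4) (1/4) (1/4). ring.
  - canon Htau (1/5) (2/5) (2/5). ring.
Qed.
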